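(* Consider the $2$-user symmetric linear deterministic Z interference channel with unidirectional, rate-limited transmitter cooperation of capacity $C$ (any nonnegative integer) from transmitter $2$ to transmitter $1$, with integer parameters $m\ge1$, $n\ge0$, and suppose $\alpha\ge 2$, where $\alpha=n/m$. Then the secrecy capacity region (under the perfect secrecy constraint) is the set of all $(R_1,R_2)$ with $0\le R_1\le m$ and $R_2=0$.
   Context: Model: let $q=\max\{m,n\}$ and let $\mathbf{D}$ be the $q\times q$ downshift matrix over $\mathbb{F}_2$ (entries $d_{j',j''}=1$ if $2\le j'=j''+1\le q$, and $0$ otherwise). At each channel use, transmitter $i$ sends $\mathbf{x}_i\in\mathbb{F}_2^q$, and the outputs are $\mathbf{y}_1=\mathbf{D}^{q-m}\mathbf{x}_1\oplus\mathbf{D}^{q-n}\mathbf{x}_2$ and $\mathbf{y}_2=\mathbf{D}^{q-m}\mathbf{x}_2$, where $\oplus$ is componentwise addition mod $2$. Transmitter $i$ has a message $W_i$ uniform on $\{1,\dots,2^{NR_i}\}$ ($N$ = block length, rates in bits per channel use). Transmitter $2$ can send to transmitter $1$, over a noiseless secure link, at most $C$ bits per channel use; transmitter $2$'s signal depends only on $W_2$ (and possibly its own randomness), while transmitter $1$'s signal at each time is a function of $W_1$, the bits received so far over the cooperative link (causality), and possibly locally generated random bits. Receiver $i$ decodes $W_i$ from $\mathbf{y}_i^N$. A rate pair is achievable with perfect secrecy if there are such codes with decoding error probability tending to $0$ as $N\to\infty$ and $I(W_i;\mathbf{y}_j^N)=0$ for $i\neq j$. The secrecy capacity region is the closure of the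 set of achievable rate pairs. *)

(* Defs.v *)
From HB Require Import structures.
From mathcomp Require Import all_boot all_order all_algebra.
From mathcomp Require Import all_classical all_reals all_analysis.
Set Implicit Arguments. Unset Strict Implicit. Unset Printing Implicit Defensive.
Import Order.TTheory GRing.Theory Num.Theory numFieldTopology.Exports.
Local Open Scope ring_scope.
Local Open Scope classical_set_scope.

Definition qdim (m n : nat) : nat := maxn m n.

Definition downshift (q : nat) : 'M['F_2]_q :=
  \matrix_(i, j) ((nat_of_ord i == (nat_of_ord j).+1)%:R : 'F_2).

Definition Dpow (q k : nat) (x : 'cV['F_2]_q) : 'cV['F_2]_q :=
  iter k (mulmx (downshift q)) x.

Definition out1 (m n : nat) (x1 x2 : 'cV['F_2]_(qdim m n)) : 'cV['F_2]_(qdim m n) :=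
  Dpow (qdim m n - m) x1 + Dpow (qdim m n - n) x2.
Definition out2 (m n : nat) (x1 x2 : 'cV['F_2]_(qdim m n)) : 'cV['F_2]_(qdim m n) :=
  Dpow (qdim m n - m) x2.

Definition linksym (C : nat) := {ffun 'I_C -> bool}.

(** A code of block length N with message sets 'I_M1, 'I_M2.
    Local randomness of transmitter i: L_i uniform random bits. *)
Record code (m n C N M1 M2 : nat) := Code {
  L1 : nat;
  L2 : nat;
  coop : 'I_M2 -> {ffun 'I_L2 -> bool} -> 'I_N -> linksym C;
  enc1 : 'I_N -> 'I_M1 -> {ffun 'I_L1 -> bool} -> {ffun 'I_N -> linksym C} ->
         'cV['F_2]_(qdim m n);
  enc2 : 'I_M2 -> {ffun 'I_L2 -> bool} -> 'I_N -> 'cV['F_2]_(qdim m n);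
  dec1 : {ffun 'I_N -> 'cV['F_2]_(qdim m n)} -> 'I_M1;
  dec2 : {ffun 'I_N -> 'cV['F_2]_(qdim m n)} -> 'I_M2;
  enc1_causal : forall (t : 'I_N) w u (v v' : {ffun 'I_N -> linksym C}),
      (forall s : 'I_N, (s <= t)%N -> v s = v' s) -> enc1 t w u v = enc1 t w u v'
}.

Arguments L1 {m n C N M1 M2} c.
Arguments L2 {m n C N M1 M2} c.
Arguments coop {m n C N M1 M2} c _ _ _.
Arguments enc1 {m n C N M1 M2} c _ _ _ _.
Arguments enc2 {m n C N M1 M2} c _ _ _.
Arguments dec1 {m n C N M1 M2} c _.
Arguments dec2 {m n C N M1 M2} c _.

Section CodeRV.
Variables (m n C N M1 M2 : nat) (c : code m n C N M1 M2).

(** Sample space: (W1, W2, U1, U2), uniformly distributed. *)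
Definition omega : finType :=
  ('I_M1 * 'I_M2 * {ffun 'I_(L1 c) -> bool} * {ffun 'I_(L2 c) -> bool})%type.

Definition W1 (w : omega) : 'I_M1 := w.1.1.1.
Definition W2 (w : omega) : 'I_M2 := w.1.1.2.
Definition U1 (w : omega) := w.1.2.
Definition U2 (w : omega) := w.2.
Definition linkseq (w : omega) : {ffun 'I_N -> linksym C} :=
  [ffun t => coop c (W2 w) (U2 w) t].
Definition X1 (w : omega) : {ffun 'I_N -> 'cV['F_2]_(qdim m n)} :=
  [ffun t => enc1 c t (W1 w) (U1 w) (linkseq w)].
Definition X2 (w : omega) : {ffun 'I_N -> 'cV['F_2]_(qdim m n)} :=
  [ffun t => enc2 c (W2 w) (U2 w) t].
Definition Y1 (w : omega) : {ffun 'I_N -> 'cV['F_2]_(qdim m n)} :=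
  [ffun t => out1 (X1 w t) (X2 w t)].
Definition Y2 (w : omega) : {ffun 'I_N -> 'cV['F_2]_(qdim m n)} :=
  [ffun t => out2 (X1 w t) (X2 w t)].
End CodeRV.

Definition Pr (R : realType) (T : finType) (A : pred T) : R :=
  #|A|%:R / #|T|%:R.

(** Mutual information I(X;Y) (natural log; 0 log 0 = 0). *)
Definition mutinfo (R : realType) (T A B : finType) (X : T -> A) (Y : T -> B) : R :=
  \sum_(a : A) \sum_(b : B)
    (let pab := Pr R [pred t | (X t == a) && (Y t == b)] in
     if pab == 0 then 0
     else pab * ln (pab / (Pr R [pred t | X t == a] * Pr R [pred t | Y t == b]))).

Definition errprob (R : realType) m n C N M1 M2 (c : code m n C N M1 M2) : R :=
  Pr R [pred w : omega c | (dec1 c (Y1 w) != W1 w) || (dec2 c (Y2 w) != W2 w)].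

Definition achievable (R : realType) (m n C : nat) (r : R * R) : Prop :=
  0 <= r.1 /\ 0 <= r.2 /\
  exists (M1 M2 : nat -> nat) (c : forall N, code m n C N (M1 N) (M2 N)),
    (forall N : nat,
        (2 : R) `^ (N%:R * r.1) <= (M1 N)%:R /\ (2 : R) `^ (N%:R * r.2) <= (M2 N)%:R) /\
    (forall N : nat,
        mutinfo R (@W1 _ _ _ _ _ _ (c N)) (@Y2 _ _ _ _ _ _ (c N)) = 0 /\
        mutinfo R (@W2 _ _ _ _ _ _ (c N)) (@Y1 _ _ _ _ _ _ (c N)) = 0) /\
    (forall eps : R, 0 < eps -> exists N0 : nat, forall N : nat,
        (N0 <= N)%N -> errprob R (c N) <= eps).

Definition secrecy_capacity_region (R : realType) (m n C : nat) : set (R * R) :=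
  closure ([set r | achievable m n C r] : set (R * R)).

(* Main.v *)
Require Import Defs.
From HB Require Import structures.
From mathcomp Require Import all_boot all_order all_algebra.
From mathcomp Require Import all_classical all_reals all_analysis.
From mathcomp Require Import zify ring lra.
Import Order.TTheory GRing.Theory Num.Theory numFieldTopology.Exports.
Local Open Scope ring_scope.
Local Open Scope classical_set_scope.

Lemma Dshift_0 q (v : 'cV['F_2]_q) (i : 'I_q) : (i:nat) = 0%N ->
  (downshift q *m v) i 0 = 0.
Proof.
move=> hi; rewrite !mxE big1 // => j _; rewrite mxE hi /= mul0r //.
Qed.

Lemma Dshift_S q (v : 'cV['F_2]_q) (i j : 'I_q) : (i:nat) = j.+1 ->
  (downshift q *m v) i 0 = v j 0.
Proof.
move=> hi; rewrite !mxE (bigD1 j) //= big1 ?addr0.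
  by rewrite mxE hi eqxx mul1r.
move=> k hk; rewrite mxE hi eqSS.
have -> : (j == k :> nat) = false.
  by apply/negbTE; apply: contra hk => /eqP h; apply/eqP/val_inj.
by rewrite mul0r.
Qed.

Lemma Dpow_lo q k (x : 'cV['F_2]_q) (i : 'I_q) : (i < k)%N -> Dpow k x i 0 = 0.
Proof.
elim: k i => [|k IH] i //= hi.
rewrite /Dpow /=.
case: (posnP i) => hi0; first exact: Dshift_0.
have hq : (i.-1 < q)%N by rewrite (leq_ltn_trans (leq_pred _)).
rewrite (@Dshift_S _ _ i (Ordinal hq)) /=; last by rewrite prednK.
apply: IH => /=; rewrite -ltnS prednK //.
Qed.

Lemma Dpow_hi q k (x : 'cV['F_2]_q) (i j : 'I_q) : (i:nat) = (j + k)%N ->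
  Dpow k x i 0 = x j 0.
Proof.
elim: k i => [|k IH] i hi.
  by rewrite /Dpow /=; congr (x _ _); apply: val_inj; rewrite /= hi addn0.
have hq : (i.-1 < q)%N by rewrite (leq_ltn_trans (leq_pred _)).
rewrite /Dpow /= (@Dshift_S _ _ i (Ordinal hq)) /=; last by rewrite hi addnS.
by apply: IH => /=; rewrite hi addnS.
Qed.
Arguments Dpow_hi {q k} x {i j}.
Arguments Dpow_lo {q k} x {i}.
Lemma Dpow_case q k (i : 'I_q) : (i < k)%N \/ exists j : 'I_q, (i:nat) = (j + k)%N.
Proof.
case: (ltnP i k) => h; [by left|right].
have hq : (i - k < q)%N by rewrite (leq_ltn_trans (leq_subr _ _)).
by exists (Ordinal hq); rewrite /= subnK.
Qed.

Lemma Dpow_ext q k (x y : 'cV['F_2]_q) :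
  (forall j : 'I_q, (j + k < q)%N -> x j 0 = y j 0) -> Dpow k x = Dpow k y.
Proof.
move=> h; apply/matrixP => i c; rewrite (ord1 c).
case: (Dpow_case _ k i) => [hi|[j hj]]; first by rewrite !Dpow_lo.
by rewrite (Dpow_hi x hj) (Dpow_hi y hj); apply: h; rewrite -hj.
Qed.

Lemma qdimE m n : (m <= n)%N -> qdim m n = n.
Proof. by move=> h; rewrite /qdim; apply/maxn_idPr. Qed.

Lemma out2_of_out1 m n : (2 * m <= n)%N -> forall x1 x2 : 'cV['F_2]_(qdim m n),
  out2 x1 x2 = Dpow (qdim m n - m) (out1 x1 x2).
Proof.
move=> hmn x1 x2; have hq : qdim m n = n by apply: qdimE; lia.
apply/matrixP => i c; rewrite (ord1 c) /out2.
case: (Dpow_case _ (qdim m n - m) i) => [hi|[j hj]]; first by rewrite !Dpow_lo.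
rewrite (Dpow_hi x2 hj) /out1 (Dpow_hi _ hj) !mxE.
have hj2 : (j < qdim m n - m)%N.
  have := ltn_ord i; rewrite hj; lia.
rewrite Dpow_lo // add0r (@Dpow_hi _ _ _ j j) //.
have -> : (qdim m n - n = 0)%N by rewrite hq subnn.
by rewrite addn0.
Qed.

Section Info.
Variable R : realType.

Lemma ln_le_sub1 (y : R) : 0 < y -> ln y <= y - 1.
Proof.
move=> hy; have h := @le_ln1Dx R (y - 1).
rewrite [1 + _]addrC subrK in h; apply: h.
lra.
Qed.

Lemma ln_lt_sub1 (y : R) : 0 < y -> y != 1 -> ln y < y - 1.
Proof.
move=> hy hy1; set s := Num.sqrt y.
have hs : 0 < s by rewrite sqrtr_gt0.
have hss : y = s * s by rewrite -expr2 sqr_sqrtr // ltW.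
have hs1 : s - 1 != 0 by rewrite subr_eq0; apply: contra hy1 => /eqP h; rewrite hss h mulr1.
rewrite hss lnM ?posrE //.
have h := @ln_le_sub1 s hs.
have hp : 0 < (s - 1) * (s - 1) by rewrite -expr2 exprn_even_gt0.
nra.
Qed.

End Info.

Lemma sum_fiber (T B : finType) (S : pred T) (Y : T -> B) :
  (\sum_(b : B) #|[pred t | S t && (Y t == b)]| = #|S|)%N.
Proof.
rewrite -sum1_card (partition_big Y xpredT) //=.
apply: eq_bigr => b _; rewrite -sum1_card; apply: eq_bigl => t.
by rewrite !inE.
Qed.

Section Gibbs.
Variable R : realType.

Lemma psum2_eq0 (A B : finType) (F : A -> B -> R) :
  (forall a b, 0 <= F a b) -> \sum_a \sum_b F a b = 0 -> forall a b, F a b = 0.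
Proof.
move=> h0 hs a b.
have h1 := @psumr_eq0P _ _ xpredT (fun a => \sum_b F a b) (fun a _ => sumr_ge0 _ (fun b _ => h0 a b)) hs a isT.
exact: (@psumr_eq0P _ _ xpredT (F a) (fun b _ => h0 a b) h1 b isT).
Qed.

Lemma Pr_ge0 (T : finType) (S : pred T) : 0 <= Pr R S.
Proof. by rewrite /Pr divr_ge0. Qed.

Lemma Pr_le (T : finType) (S1 S2 : pred T) :
  (forall t, S1 t -> S2 t) -> Pr R S1 <= Pr R S2.
Proof.
move=> h; rewrite /Pr ler_wpM2r ?invr_ge0 // ler_nat.
by apply: subset_leq_card; apply/fintype.subsetP => t; rewrite !unfold_in; apply: h.
Qed.

Lemma sum_Pr_fiber (T B : finType) (S : pred T) (Y : T -> B) :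
  \sum_b Pr R [pred t | S t && (Y t == b)] = Pr R S.
Proof. by rewrite /Pr -mulr_suml -natr_sum sum_fiber. Qed.

Lemma Pr_T (T : finType) : (0 < #|T|)%N -> Pr R (@predT T) = 1.
Proof.
move=> h; rewrite /Pr divff // pnatr_eq0 -lt0n.
by rewrite (eq_card (B := T)) // => t; rewrite !inE.
Qed.

Lemma mutinfo0_indep (T A B : finType) (X : T -> A) (Y : T -> B) :
  (0 < #|T|)%N -> mutinfo R X Y = 0 ->
  forall a b, Pr R [pred t | (X t == a) && (Y t == b)] =
              Pr R [pred t | X t == a] * Pr R [pred t | Y t == b].
Proof.
move=> hT.
set p := fun a b => Pr R [pred t | (X t == a) && (Y t == b)].
set pa := fun a => Pr R [pred t | X t == a].
set pb := fun b => Pr R [pred t | Y t == b].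
set f := fun a b => if p a b == 0 then 0 else p a b * ln (p a b / (pa a * pb b)).
move=> hmi.
have hmi' : \sum_a \sum_b f a b = 0 := hmi.
have p0 : forall a b, 0 <= p a b by move=> a b; apply: Pr_ge0.
have pa0 : forall a, 0 <= pa a by move=> a; apply: Pr_ge0.
have pb0 : forall b, 0 <= pb b by move=> b; apply: Pr_ge0.
have ppa : forall a b, p a b <= pa a.
  by move=> a b; apply: Pr_le => t /andP[].
have ppb : forall a b, p a b <= pb b.
  by move=> a b; apply: Pr_le => t /andP[].
have sa : \sum_a pa a = 1.
  rewrite -(Pr_T _ hT) -(sum_Pr_fiber _ _ predT X); apply: eq_bigr => a _.
  by rewrite /pa /Pr; congr (_%:R / _); apply: eq_card => t; rewrite !inE.
have sb : \sum_b pb b = 1.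
  rewrite -(Pr_T _ hT) -(sum_Pr_fiber _ _ predT Y); apply: eq_bigr => b _.
  by rewrite /pb /Pr; congr (_%:R / _); apply: eq_card => t; rewrite !inE.
have sp : \sum_a \sum_b p a b = 1.
  by rewrite -sa; apply: eq_bigr => a _; rewrite /p sum_Pr_fiber.
have spp : \sum_a \sum_b (pa a * pb b) = 1.
  by rewrite -[RHS]mul1r -{1}sa mulr_suml; apply: eq_bigr => a _; rewrite -mulr_sumr sb mulr1.
set g := fun a b => if p a b == 0 then 0 else p a b - pa a * pb b.
set h := fun a b => if p a b == 0 then pa a * pb b else 0.
have h0 : forall a b, 0 <= h a b.
  by move=> a b; rewrite /h; case: ifP => // _; rewrite mulr_ge0.
have gE : forall a b, g a b = p a b - pa a * pb b + h a b.
  move=> a b; rewrite /g /h; case: ifP => [/eqP ->|_]; last by rewrite addr0.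
  by rewrite sub0r addNr.
have pos : forall a b, p a b != 0 -> [/\ 0 < p a b, 0 < pa a & 0 < pb b].
  move=> a b hp; have hp' : 0 < p a b by rewrite lt_def hp p0.
  split => //; [exact: lt_le_trans hp' (ppa a b)|exact: lt_le_trans hp' (ppb a b)].
have fg : forall a b, g a b <= f a b.
  move=> a b; rewrite /g /f; case: ifP => // /negbT hp.
  have [hp' ha hb] := pos a b hp.
  set y := pa a * pb b / p a b.
  have hy : 0 < y by rewrite /y divr_gt0 // mulr_gt0.
  have -> : p a b / (pa a * pb b) = y^-1 by rewrite /y invf_div.
  rewrite lnV ?posrE //.
  have hl := @ln_le_sub1 R y hy.
  have -> : p a b - pa a * pb b = p a b * (1 - y).
    rewrite /y; field; exact: lt0r_neq0.
  by rewrite ler_pM2l //; lra.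
have sg : \sum_a \sum_b g a b = \sum_a \sum_b h a b.
  under eq_bigr => a _ do under eq_bigr => b _ do rewrite gE.
  rewrite (eq_bigr (fun a => \sum_b p a b - \sum_b (pa a * pb b) + \sum_b h a b)); last first.
    by move=> a _; rewrite big_split /= sumrB.
  by rewrite big_split /= sumrB sp spp subrr add0r.
have sh0 : \sum_a \sum_b h a b = 0.
  apply/eqP; rewrite eq_le sumr_ge0 ?andbT; last first.
    by move=> a _; apply: sumr_ge0 => b _.
  rewrite -sg -[X in _ <= X]hmi'; apply: ler_sum => a _; apply: ler_sum => b _; exact: fg.
have hh : forall a b, h a b = 0 := psum2_eq0 _ _ _ h0 sh0.
have sfg : \sum_a \sum_b (f a b - g a b) = 0.
  under eq_bigr => a _ do rewrite sumrB.
  by rewrite sumrB hmi' sg sh0 subrr.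
have hfg : forall a b, f a b - g a b = 0.
  by apply: psum2_eq0 => // a b; rewrite subr_ge0.
move=> a b; rewrite -/(p a b) -/(pa a) -/(pb b).
have := hh a b; have := hfg a b; rewrite /h /f /g.
case: ifP => [/eqP -> _ /esym //|/negbT hp].
have [hp' ha hb] := pos a b hp.
move=> /eqP; rewrite subr_eq0 => /eqP hfg' _.
set y := pa a * pb b / p a b.
have hy : 0 < y by rewrite /y divr_gt0 // mulr_gt0.
have y1 : y = 1.
  apply/eqP; apply/negPn/negP => hy1.
  have hl := @ln_lt_sub1 R y hy hy1.
  move: hfg'.
  have -> : p a b / (pa a * pb b) = y^-1 by rewrite /y invf_div.
  rewrite lnV ?posrE //.
  have -> : p a b - pa a * pb b = p a b * (1 - y).
    rewrite /y; field; exact: lt0r_neq0.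
  move/mulfI => /(_ (lt0r_neq0 hp')) => e.
  by move: hl; rewrite -(opprK (ln y)) e; lra.
move: y1; rewrite /y => /(congr1 (fun z => z * p a b)).
by rewrite mul1r divfK ?lt0r_neq0 // => ->.
Qed.

End Gibbs.

Lemma Pr_ext (R : realType) (T : finType) (S1 S2 : pred T) :
  (forall t, S1 t = S2 t) -> Pr R S1 = Pr R S2.
Proof. by move=> h; rewrite /Pr (eq_card (B := S2)). Qed.

Lemma Pr_compl (R : realType) (T : finType) (S : pred T) : (0 < #|T|)%N ->
  Pr R [pred t | ~~ S t] = 1 - Pr R S.
Proof.
move=> hT; rewrite /Pr.
have h := cardC S.
have -> : #|[pred t | ~~ S t]| = (#|T| - #|S|)%N.
  rewrite -h addKn; apply: eq_card => t; by rewrite !inE.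
have hS : (#|S| <= #|T|)%N by rewrite -h leq_addr.
rewrite natrB //; field; rewrite pnatr_eq0 -lt0n //.
Qed.

Lemma card_bits L : #|{ffun 'I_L -> bool}| = (2 ^ L)%N.
Proof. by rewrite card_ffun card_bool card_ord. Qed.

Lemma card_omega m n C N M1 M2 (c : Defs.code m n C N M1 M2) :
  #|omega c| = (M1 * M2 * 2 ^ L1 c * 2 ^ L2 c)%N.
Proof. by rewrite /omega !card_prod !card_ord !card_bits. Qed.

Definition proj_m q m (hm : (m <= q)%N) (x : 'cV['F_2]_q) : {ffun 'I_m -> 'F_2} :=
  [ffun i => x (widen_ord hm i) 0].

Lemma card_fF N m : #|{ffun 'I_N -> {ffun 'I_m -> 'F_2}}| = (2 ^ (m * N))%N.
Proof. by rewrite !card_ffun card_Fp // !card_ord -expnM. Qed.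

Lemma count_correct1 m n C N M1 M2 (c : Defs.code m n C N M1 M2) :
  (#|[pred w : omega c | dec1 c (Y1 w) == W1 w]| <=
    M2 * 2 ^ L1 c * 2 ^ L2 c * 2 ^ (m * N))%N.
Proof.
have hm : (m <= qdim m n)%N by rewrite /qdim leq_maxl.
set A := [set w : omega c | dec1 c (Y1 w) == W1 w]%SET.
have -> : #|[pred w : omega c | dec1 c (Y1 w) == W1 w]| = #|A|.
  by apply: eq_card => w; rewrite !inE.
pose phi (w : omega c) := (W2 w, U1 w, U2 w,
   [ffun t => proj_m _ _ hm (X1 w t)] : {ffun 'I_N -> {ffun 'I_m -> 'F_2}}).
have inj : {in A &, injective phi}.
  move=> [[[w1 w2] u1] u2] [[[w1' w2'] u1'] u2']; rewrite !inE => h1 h2 e.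
  move: e; rewrite /phi /W2 /U1 /U2 /= => -[e2 e3 e4 e5]; subst w2' u1' u2'.
  have eY : Y1 (((w1, w2), u1), u2) = Y1 (((w1', w2), u1), u2) :> {ffun _ -> _}.
    apply/ffunP => t; rewrite !ffunE /out1; congr (_ + _).
    apply: Dpow_ext => j hj.
    have hjm : (j < m)%N by have := hm; move: hj; lia.
    have := congr1 (fun f : {ffun 'I_N -> {ffun 'I_m -> 'F_2}} => f t (Ordinal hjm)) e5; rewrite !ffunE /=.
    by have -> : widen_ord hm (Ordinal hjm) = j by apply: val_inj.
  move/eqP: h1; move/eqP: h2; rewrite /W1 /= eY => -> ->; done.
rewrite -(card_in_imset inj).
apply: leq_trans (max_card _) _.
by rewrite !card_prod card_ord !card_bits card_fF.
Qed.

Lemma omega_gt0 m n C N M1 M2 (c : Defs.code m n C N M1 M2) :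
  (0 < M1)%N -> (0 < M2)%N -> (0 < #|omega c|)%N.
Proof. by move=> h1 h2; rewrite card_omega !muln_gt0 h1 h2 !expn_gt0. Qed.

Lemma Pr_W2 (R : realType) m n C N M1 M2 (c : Defs.code m n C N M1 M2) (a : 'I_M2) :
  (0 < M1)%N -> Pr R [pred w : omega c | W2 w == a] = 1 / M2%:R.
Proof.
move=> h1.
have h2 : (0 < M2)%N by apply: leq_ltn_trans (ltn_ord a).
rewrite /Pr.
have -> : #|[pred w : omega c | W2 w == a]| =
   #|finset.setX (finset.setX (finset.setX [set: 'I_M1] [set a]) [set: {ffun 'I_(L1 c) -> bool}]) [set: {ffun 'I_(L2 c) -> bool}]|.
  by apply: eq_card => w; rewrite !inE /W2 /= !andbT.
rewrite !cardsX !cardsT cards1 card_omega !card_ord !card_bits.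
rewrite !natrM; field.
by rewrite !pnatr_eq0 -!lt0n h1 h2 !expn_gt0.
Qed.

Lemma Y2_of_Y1 m n C N M1 M2 (c : Defs.code m n C N M1 M2) (w : omega c) :
  (2 * m <= n)%N ->
  Y2 w = [ffun t => Dpow (qdim m n - m) (Y1 w t)].
Proof.
by move=> h; apply/ffunP => t; rewrite !ffunE out2_of_out1.
Qed.

Lemma correct2_bound (R : realType) m n C N M1 M2 (c : Defs.code m n C N M1 M2) :
  (2 * m <= n)%N -> (0 < M1)%N -> (0 < M2)%N ->
  mutinfo R (@W2 _ _ _ _ _ _ c) (@Y1 _ _ _ _ _ _ c) = 0 ->
  Pr R [pred w : omega c | dec2 c (Y2 w) == W2 w] = 1 / M2%:R.
Proof.
move=> hmn h1 h2 hmi.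
have hT := @omega_gt0 _ _ _ _ _ _ c h1 h2.
have ind := @mutinfo0_indep R _ _ _ _ _ hT hmi.
pose phi (y : {ffun 'I_N -> 'cV['F_2]_(qdim m n)}) :=
  [ffun t => Dpow (qdim m n - m) (y t)].
rewrite -(sum_Pr_fiber R _ _ _ (@Y1 _ _ _ _ _ _ c)).
rewrite (eq_bigr (fun b => 1 / M2%:R * Pr R [pred w : omega c | Y1 w == b])).
  rewrite -mulr_sumr.
  have -> : \sum_b Pr R [pred w : omega c | Y1 w == b] = 1.
    rewrite -(Pr_T R _ hT) -(sum_Pr_fiber R _ _ predT (@Y1 _ _ _ _ _ _ c)).
    by apply: eq_bigr => b _; apply: Pr_ext => w; rewrite /=.
  by rewrite mulr1.
move=> b _.
rewrite -(@Pr_W2 R _ _ _ _ _ _ c (dec2 c (phi b)) h1) -ind.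
apply: Pr_ext => w /=.
case: (eqVneq (Y1 w) b) => [e|]; last by rewrite !andbF.
by rewrite !andbT Y2_of_Y1 // e eq_sym.
Qed.

Lemma Pr_false (R : realType) (T : finType) (S : pred T) :
  (forall t, S t = false) -> Pr R S = 0.
Proof.
move=> h; rewrite /Pr (eq_card (B := pred0)) ?card0 ?mul0r //.
Qed.

Lemma mutinfo_indep0 (R : realType) (T A B : finType) (X : T -> A) (Y : T -> B) :
  (forall a b, Pr R [pred t | (X t == a) && (Y t == b)] =
              Pr R [pred t | X t == a] * Pr R [pred t | Y t == b]) ->
  mutinfo R X Y = 0.
Proof.
move=> h; rewrite /mutinfo; apply: big1 => a _; apply: big1 => b _ /=.
case: ifP => // /negbT hp.
by rewrite [X in ln (X / _)]h divff -?h // ln1 mulr0.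
Qed.

Lemma mutinfo_constY (R : realType) (T A B : finType) (X : T -> A) (Y : T -> B) y0 :
  (0 < #|T|)%N -> (forall t, Y t = y0) -> mutinfo R X Y = 0.
Proof.
move=> hT hY; apply: mutinfo_indep0 => a b.
case: (eqVneq b y0) => [->|hb].
  have -> : Pr R [pred t | Y t == y0] = 1.
    by rewrite -(Pr_T R _ hT); apply: Pr_ext => t; rewrite /= hY eqxx.
  by rewrite mulr1; apply: Pr_ext => t; rewrite /= hY eqxx andbT.
rewrite (@Pr_false R _ [pred t | Y t == b]) ?mulr0.
  by apply: Pr_false => t; rewrite /= hY (eq_sym y0) (negbTE hb) andbF.
by move=> t; rewrite /= hY (eq_sym y0) (negbTE hb).
Qed.

Lemma mutinfo_constX (R : realType) (T A B : finType) (X : T -> A) (Y : T -> B) x0 :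
  (0 < #|T|)%N -> (forall t, X t = x0) -> mutinfo R X Y = 0.
Proof.
move=> hT hX; apply: mutinfo_indep0 => a b.
case: (eqVneq a x0) => [->|ha].
  have -> : Pr R [pred t | X t == x0] = 1.
    by rewrite -(Pr_T R _ hT); apply: Pr_ext => t; rewrite /= hX eqxx.
  by rewrite mul1r; apply: Pr_ext => t; rewrite /= hX eqxx.
rewrite (@Pr_false R _ [pred t | X t == a]) ?mul0r.
  by apply: Pr_false => t; rewrite /= hX (eq_sym x0) (negbTE ha).
by move=> t; rewrite /= hX (eq_sym x0) (negbTE ha).
Qed.

Lemma big_N (R : realType) (d : R) : 0 < d ->
  exists K : nat, forall N : nat, (K <= N)%N -> 1 <= N%:R * d.
Proof.
move=> hd; exists (Num.Def.archi_bound (1 / d)) => N hN.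
have h := @archi_boundP R (1 / d) (ltW (divr_gt0 ltr01 hd)).
have h2 : (Num.Def.archi_bound (1 / d))%:R <= N%:R :> R by rewrite ler_nat.
rewrite -ler_pdivrMr //; apply: ltW; exact: lt_le_trans h h2.
Qed.

Definition Tm (N m : nat) := {ffun 'I_N -> {ffun 'I_m -> 'F_2}}.

Definition pad q m (g : {ffun 'I_m -> 'F_2}) : 'cV['F_2]_q :=
  \col_i (if (insub (val i) : option 'I_m) is Some j then g j else 0).

Lemma pad_val q m (g : {ffun 'I_m -> 'F_2}) (i : 'I_q) (j : 'I_m) :
  val i = val j -> pad q m g i 0 = g j.
Proof.
move=> e; rewrite /pad mxE; case: insubP => [j' _ hj|].
  by congr (g _); apply: val_inj; rewrite hj e.
by rewrite e ltn_ord.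
Qed.

Lemma shift_lt m n (i : 'I_m) : (i + (qdim m n - m) < qdim m n)%N.
Proof. have := ltn_ord i; have := leq_maxl m n; rewrite /qdim; lia. Qed.

Definition shiftq m n (i : 'I_m) : 'I_(qdim m n) := Ordinal (shift_lt m n i).

Lemma Dpow0 q k : Dpow k (0 : 'cV['F_2]_q) = 0.
Proof. by elim: k => //= k IH; rewrite /Dpow /= -/(Dpow k 0) IH mulmx0. Qed.

Definition ach_code (m n C N : nat) : Defs.code m n C N #|Tm N m| 1 :=
  @Code m n C N #|Tm N m| 1 0 0
    (fun _ _ _ => [ffun _ => false])
    (fun t w1 _ _ => pad (qdim m n) m (enum_val w1 t))
    (fun _ _ _ => 0)
    (fun y => enum_rank ([ffun t => [ffun i : 'I_m => y t (shiftq m n i) 0]] : Tm N m))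
    (fun _ => ord0)
    (fun _ _ _ _ _ _ => erefl).

Lemma ach_dec1 m n C N (w : omega (ach_code m n C N)) :
  dec1 (ach_code m n C N) (Y1 w) = W1 w.
Proof.
rewrite /= -[RHS]enum_valK; congr enum_rank.
apply/ffunP => t; apply/ffunP => i; rewrite !ffunE /out1 mxE.
rewrite /= Dpow0 mxE addr0.
rewrite (Dpow_hi _ (i:=shiftq m n i) (j:=widen_ord (leq_maxl m n) i)) //.
by rewrite (@pad_val _ _ _ _ i).
Qed.

Lemma ach_Y2 m n C N (w : omega (ach_code m n C N)) : Y2 w = [ffun=> 0].
Proof. by apply/ffunP => t; rewrite !ffunE /out2 /= Dpow0. Qed.

Lemma ach_W2 m n C N (w : omega (ach_code m n C N)) : W2 w = ord0.
Proof. by rewrite (ord1 (W2 w)). Qed.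

Lemma ach_omega_gt0 m n C N : (0 < #|omega (ach_code m n C N)|)%N.
Proof.
apply: omega_gt0 => //; rewrite card_fF expn_gt0 //.
Qed.

Lemma ach_err (R : realType) m n C N : errprob R (ach_code m n C N) = 0.
Proof.
apply: Pr_false => w.
have := @ach_dec1 m n C N w; rewrite /= => ->.
by rewrite eqxx (@ach_W2 m n C N w) eqxx.
Qed.

Lemma achievable_region (R : realType) m n C (r : R * R) :
  0 <= r.1 <= m%:R -> r.2 = 0 -> achievable m n C r.
Proof.
move=> /andP[h0 hm] h2.
split => //; split; first by rewrite h2.
exists (fun N => #|Tm N m|), (fun _ => 1%N), (fun N => ach_code m n C N).
split; [|split].
- move=> N; split.
    rewrite card_fF natrX -powR_mulrn // natrM.
    apply: ler_powR; first by rewrite ler1n.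
    by rewrite [X in _ <= X]mulrC ler_wpM2l.
  by rewrite h2 mulr0 powRr0.
- move=> N; split.
    apply: (@mutinfo_constY R _ _ _ _ _ [ffun=> 0]); first exact: ach_omega_gt0.
    by move=> w; apply: ach_Y2.
  apply: (@mutinfo_constX R _ _ _ _ _ ord0); first exact: ach_omega_gt0.
  by move=> w; apply: ach_W2.
- by move=> eps heps; exists 0%N => N _; rewrite ach_err ltW.
Qed.

Lemma Pr_correct1 (R : realType) m n C N M1 M2 (c : Defs.code m n C N M1 M2) :
  (0 < M1)%N -> (0 < M2)%N ->
  Pr R [pred w : omega c | dec1 c (Y1 w) == W1 w] <= (2 ^ (m * N))%:R / M1%:R.
Proof.
move=> h1 h2; rewrite /Pr card_omega.
have hc := @count_correct1 _ _ _ _ _ _ c.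
set K := (M2 * 2 ^ L1 c * 2 ^ L2 c)%N.
have hK : (0 < K)%N by rewrite /K !muln_gt0 h2 !expn_gt0.
have -> : (M1 * M2 * 2 ^ L1 c * 2 ^ L2 c)%N = (M1 * K)%N by rewrite /K !mulnA.
apply: (@le_trans _ _ ((K * 2 ^ (m * N))%:R / (M1 * K)%:R)).
  by rewrite ler_wpM2r ?invr_ge0 // ler_nat.
rewrite !natrM le_eqVlt; apply/orP; left; apply/eqP; field.
by rewrite !pnatr_eq0 -!lt0n h1 h2 !expn_gt0.
Qed.

Lemma err_ge1 (R : realType) m n C N M1 M2 (c : Defs.code m n C N M1 M2) :
  (0 < M1)%N -> (0 < M2)%N ->
  1 - (2 ^ (m * N))%:R / M1%:R <= errprob R c.
Proof.
move=> h1 h2.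
apply: (@le_trans _ _ (Pr R [pred w : omega c | ~~ (dec1 c (Y1 w) == W1 w)])).
  rewrite Pr_compl ?omega_gt0 //; rewrite lerD2l lerN2; exact: Pr_correct1.
by apply: Pr_le => w /= ->.
Qed.

Lemma err_ge2 (R : realType) m n C N M1 M2 (c : Defs.code m n C N M1 M2) :
  (2 * m <= n)%N -> (0 < M1)%N -> (0 < M2)%N ->
  mutinfo R (@W2 _ _ _ _ _ _ c) (@Y1 _ _ _ _ _ _ c) = 0 ->
  1 - 1 / M2%:R <= errprob R c.
Proof.
move=> hmn h1 h2 hmi.
apply: (@le_trans _ _ (Pr R [pred w : omega c | ~~ (dec2 c (Y2 w) == W2 w)])).
  by rewrite Pr_compl ?omega_gt0 // correct2_bound.
by apply: Pr_le => w /= ->; rewrite orbT.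
Qed.

Lemma region_of_achievable (R : realType) m n C (r : R * R) :
  (2 * m <= n)%N -> achievable m n C r -> 0 <= r.1 <= m%:R /\ r.2 = 0.
Proof.
move=> hmn [h1 [h2 [M1 [M2 [c [hrate [hsec herr]]]]]]].
have two_gt0 : (0 : R) < 2 by [].
have M1pos : forall N, (0 < M1 N)%N.
  move=> N; rewrite -(ltr0n R); apply: lt_le_trans (proj1 (hrate N)).
  exact: powR_gt0.
have M2pos : forall N, (0 < M2 N)%N.
  move=> N; rewrite -(ltr0n R); apply: lt_le_trans (proj2 (hrate N)).
  exact: powR_gt0.
have q4 : (0:R) < 1/4 by rewrite divr_gt0.
have [N0 hN0] := herr (1/4) q4.
split.
  rewrite h1 /=; rewrite leNgt; apply/negP => hlt.
  have hd : 0 < r.1 - m%:R by rewrite subr_gt0.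
  have [K hK] := @big_N R _ hd.
  set N := maxn N0 K.
  have e1 := hN0 N (leq_maxl _ _).
  have e2 := @err_ge1 R _ _ _ _ _ _ (c N) (M1pos N) (M2pos N).
  have hND := hK N (leq_maxr _ _).
  set P := 2 `^ (N%:R * r.1).
  have hP : 0 < P by apply: powR_gt0.
  have hPM : P <= (M1 N)%:R := proj1 (hrate N).
  have X : (2 ^ (m * N))%:R = 2 `^ (N%:R * m%:R) :> R.
    by rewrite natrX -powR_mulrn // natrM mulrC.
  have e3 : (2 ^ (m * N))%:R / (M1 N)%:R <= 2 `^ (N%:R * m%:R) / P.
    rewrite X ler_wpM2l ?powR_ge0 // lef_pV2 ?posrE //.
    by rewrite ltr0n M1pos.
  have e4 : 2 `^ (N%:R * m%:R) / P = 2 `^ (N%:R * m%:R - N%:R * r.1).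
    by rewrite powRB // pnatr_eq0 implybT.
  have e5 : 2 `^ (N%:R * m%:R - N%:R * r.1) <= 2 `^ (-1) :> R.
    apply: ler_powR; first by rewrite ler1n.
    by move: hND; rewrite mulrBr; lra.
  rewrite powR_inv1 // in e5.
  have : (2 : R)^-1 = 1/2 by rewrite div1r.
  lra.
case: (eqVneq r.2 0) => // hne; exfalso.
have hpos : 0 < r.2 by rewrite lt_def hne h2.
have [K hK] := @big_N R _ hpos.
set N := maxn N0 K.
have e1 := hN0 N (leq_maxl _ _).
have e2 := @err_ge2 R _ _ _ _ _ _ (c N) hmn (M1pos N) (M2pos N) (proj2 (hsec N)).
have hND := hK N (leq_maxr _ _).
have e3 : 2 <= 2 `^ (N%:R * r.2) :> R.
  by apply: le1r_powR; [rewrite ler1n|exact: hND].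
have e4 : (2 : R) <= (M2 N)%:R := le_trans e3 (proj2 (hrate N)).
have e5 : 1 / (M2 N)%:R <= 1 / 2 :> R.
  rewrite !div1r lef_pV2 ?posrE //.
  by rewrite ltr0n M2pos.
lra.
Qed.
Lemma region_closed (R : realType) (M : R) :
  closed [set r : R * R | 0 <= r.1 <= M /\ r.2 = 0].
Proof.
have -> : [set r : R * R | 0 <= r.1 <= M /\ r.2 = 0] =
  (fst @^-1` `[0, M]) `&` (snd @^-1` [set x | x = 0]).
  by apply/seteqP; split => r /=; rewrite /= in_itv /=.
apply: closedI.
  apply: (proj1 (continuous_closedP _)); last exact: itv_closed.
  by move=> x; apply: cvg_fst.
apply: (proj1 (continuous_closedP _)); last exact: closed_eq.
by move=> x; apply: cvg_snd.
Qed.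

Theorem theorem3 (R : realType) (m n C : nat) :
  (1 <= m)%N -> (2 : R) <= n%:R / m%:R ->
  @secrecy_capacity_region R m n C =
    [set r : R * R | 0 <= r.1 <= m%:R /\ r.2 = 0].
Proof.
move=> hm h.
have hmn : (2 * m <= n)%N.
  by move: h; rewrite ler_pdivlMr ?ltr0n // -natrM ler_nat.
have E : [set r | achievable m n C r] = [set r : R * R | 0 <= r.1 <= m%:R /\ r.2 = 0].
  apply/seteqP; split => r /=.
  - by move=> ha; apply: region_of_achievable ha.
  - by move=> [h1 h2]; apply: achievable_region.
rewrite /secrecy_capacity_region E.
by rewrite -(proj1 (closure_id _) (region_closed R m%:R)).
Qed.
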